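(* Let $\Gamma$ be a finite connected $(G,2)$-distance-transitive graph of square-free order, where $G$ is soluble, and let $F$ be the Fitting subgroup of $G$. If $|F|$ is square-free, then $F$ does not have exactly $2$ orbits on $V(\Gamma)$.
   Context: For $G\le\mathrm{Aut}(\Gamma)$, $\Gamma$ is $(G,2)$-distance-transitive if its diameter is at least $2$, $G$ is vertex-transitive and $G_u$ is transitive on $\Gamma(u)$ and $\Gamma_2(u)$ for every vertex $u$. The Fitting subgroup is the subgroup generated by all nilpotent normal subgroups. *)

(* Defs.v *)
From mathcomp Require Import all_boot all_fingroup all_solvable maximal.
Set Implicit Arguments. Unset Strict Implicit. Unset Printing Implicit Defensive.
Local Open Scope group_scope.

Definition simple_graph (T : finType) (e : rel T) : Prop :=
  symmetric e /\ irreflexive e.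

Definition graph_connected (T : finType) (e : rel T) : Prop :=
  forall u v : T, connect e u v.

Definition nbhd1 (T : finType) (e : rel T) (u : T) : {set T} :=
  [set v | e u v].

Definition nbhd2 (T : finType) (e : rel T) (u : T) : {set T} :=
  [set v | [&& v != u, ~~ e u v & [exists w, e u w && e w v]]].

Definition diam_ge2 (T : finType) (e : rel T) : Prop :=
  exists u v : T, u != v /\ ~~ e u v.

Definition graph_auts (T : finType) (e : rel T) (G : {group {perm T}}) : Prop :=
  forall g, g \in G -> forall x y, e (g x) (g y) = e x y.

Definition dist2_transitive (T : finType) (e : rel T) (G : {group {perm T}}) : Prop :=
  [/\ diam_ge2 e,
      [transitive G, on [set: T] | 'P] &
      forall u : T,
        [transitive 'C_G[u | 'P], on nbhd1 e u | 'P] /\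
        [transitive 'C_G[u | 'P], on nbhd2 e u | 'P] ].

Definition squarefree (n : nat) : Prop :=
  0 < n /\ forall p, prime p -> ~~ (p * p %| n).

Definition n_orbits (T : finType) (H : {group {perm T}}) : nat :=
  #|orbit 'P H @: [set: T]|.

(* Main.v *)
Require Import Defs.
From mathcomp Require Import all_boot all_fingroup all_solvable maximal.
Set Implicit Arguments. Unset Strict Implicit. Unset Printing Implicit Defensive.

Local Open Scope group_scope.

Lemma cent_Fitting (gT : finGroupType) (G : {group gT}) :
  solvable G -> 'C_G('F(G)) \subset 'F(G).
Proof.
move=> solG.
have nsFG := Fitting_normal G.
have nsCG : 'C_G('F(G)) <| G.
  have := subcent_normal G 'F(G).
  by rewrite (setIidPl (normal_norm nsFG)).
set C := 'C_G('F(G)) in nsCG *.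
have solC : solvable C by apply: solvableS solG; apply: normal_sub.
have /derivedP[k Ck1] := solC.
have exP : exists n, C^`(n) \subset 'F(G) by exists k; rewrite Ck1 sub1G.
case: (ex_minnP exP) => n sCn minn.
case: n sCn minn => [|m] sCn minn; first by [].
have nsKG : C^`(m) <| G := char_normal_trans (der_char m C) nsCG.
have sKC : C^`(m) \subset C := der_sub m C.
have cKF : C^`(m) \subset 'C('F(G)).
  by apply: subset_trans sKC _; apply: subsetIr.
have nilK : nilpotent C^`(m).
  rewrite -quotient_center_nil; apply: abelian_nil; apply: sub_der1_abelian.
  rewrite subsetI der_sub /=.
  have : (C^`(m))^`(1) \subset 'F(G) by [].
  move=> h; apply: subset_trans h _; by rewrite centsC.
have := Fitting_max nsKG nilK.
move/minn; by rewrite ltnn.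
Qed.

Lemma sqf_nil_cyclic (gT : finGroupType) (F : {group gT}) :
  (forall p, prime p -> ~~ (p * p %| #|F|)%N) -> nilpotent F -> cyclic F.
Proof.
move=> sqf nilF; apply: nil_Zgroup_cyclic nilF.
apply/forall_inP => V /SylowP [p pr_p sylV].
have cardV := card_Hall sylV.
rewrite p_part in cardV.
have : logn p #|F| < 2.
  rewrite ltnNge -pfactor_dvdn // ?cardG_gt0 //.
  by rewrite expnS expn1; apply: sqf.
case: (logn p #|F|) cardV => [|[|//]] /= cV _.
  have /eqP -> : V :==: 1 by rewrite trivg_card1 cV.
  by rewrite cyclic1.
by apply: prime_cyclic; rewrite cV expn1.
Qed.

Lemma cyclic_conj_comm (gT : finGroupType) (F : {group gT}) f g h :
  cyclic F -> g \in 'N(F) -> h \in 'N(F) -> f \in F -> (f ^ g) ^ h = (f ^ h) ^ g.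
Proof.
case/cyclicP=> c defF ng nh; rewrite defF => /cycleP [k ->].
have : c ^ g \in <[c]> by rewrite -defF memJ_norm // defF cycle_id.
case/cycleP => i ci.
have : c ^ h \in <[c]> by rewrite -defF memJ_norm // defF cycle_id.
case/cycleP => j cj.
rewrite !conjXg ci cj !conjXg ci cj -!expgM.
by rewrite !mulnA (mulnC i j).
Qed.

Lemma connect_closed (T : finType) (e : rel T) (S : {set T}) a b :
  (forall x y, x \in S -> e x y -> y \in S) -> a \in S -> connect e a b -> b \in S.
Proof.
move=> cl aS /connectP [p pth ->]; elim: p a aS pth => //= y p IH a aS.
by case/andP=> eay pth; apply: IH pth; apply: cl eay.
Qed.

Theorem lemma4p6 (T : finType) (e : rel T) (G : {group {perm T}}) :
  simple_graph e -> graph_connected e -> graph_auts e G ->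
  dist2_transitive e G -> solvable G ->
  squarefree #|T| -> squarefree #|'F(G)| ->
  n_orbits 'F(G)%G <> 2.
Proof.
move=> [esym eirr] conn auts [diam trG loc] solG _ [_ sqF] norb.
have nsFG := Fitting_normal G.
have sFG : 'F(G) \subset G := normal_sub nsFG.
have nFG : G \subset 'N('F(G)) := normal_norm nsFG.
have FG : forall f, f \in 'F(G) -> f \in G := subsetP sFG.
have NG : forall g, g \in G -> g \in 'N('F(G)) := subsetP nFG.
have cycF : cyclic 'F(G) := sqf_nil_cyclic sqF (Fitting_nil G).
have abF := cyclic_abelian cycF.
set F := 'F(G) in FG NG cycF abF sFG nFG nsFG norb *.
have commF : forall f h z, f \in F -> h \in F -> f (h z) = h (f z).
  move=> f h z fF hF; rewrite -!permM.
  by have /centsP cF := abF; rewrite (cF _ hF f fF).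
pose orb z := orbit 'P F z.
have orbP : forall x y, reflect (exists2 f, f \in F & f x = y) (y \in orb x).
  move=> x y; apply: (iffP orbitP) => [[f fF <-]|[f fF <-]]; by exists f.
have oeq : forall x y, y \in orb x -> orb y = orb x.
  by move=> x y h; apply/orbit_eqP.
have otr : forall x y z, y \in orb x -> z \in orb y -> z \in orb x.
  by move=> x y z h; rewrite (oeq _ _ h).
have omove : forall g x y, g \in G -> y \in orb x -> g y \in orb (g x).
  move=> g x y gG /orbP [f fF <-]; apply/orbP; exists (f ^ g).
    by rewrite memJ_norm // NG.
  by rewrite conjgE !permM permK.
have [X [Y [XY defO]]] : exists X Y, X != Y /\ orbit 'P F @: [set: T] = [set X; Y].
  by apply/cards2P; apply/eqP; exact: norb.
have inO : forall z, orb z \in [set X; Y] by move=> z; rewrite -defO imset_f.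
have two : forall x y z, y \notin orb x -> z \in orb x \/ z \in orb y.
  move=> x y z nyx.
  have nxy : orb x != orb y.
    by apply: contra nyx => /eqP ->; apply: orbit_refl.
  have zz : forall a, orb z = orb a -> z \in orb a.
    by move=> a <-; apply: orbit_refl.
  move: (inO x) (inO y) (inO z) => /set2P hx /set2P hy /set2P hz.
  have : orb z = orb x \/ orb z = orb y.
    by move: nxy; case: hx => ->; case: hy => ->; case: hz => ->;
      rewrite ?eqxx //; auto.
  by case => h; [left | right]; apply: zz.
have other : forall x, exists y, y \notin orb x.
  move=> x.
  have : X \in orbit 'P F @: [set: T] by rewrite defO !inE eqxx.
  case/imsetP => x1 _ X1.
  have : Y \in orbit 'P F @: [set: T] by rewrite defO !inE eqxx orbT.
  case/imsetP => y1 _ Y1.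
  case: (boolP (x1 \in orb x)) => h1; last by exists x1.
  case: (boolP (y1 \in orb x)) => h2; last by exists y1.
  by move: XY; rewrite X1 Y1 -/(orb x1) -/(orb y1) (oeq _ _ h1) (oeq _ _ h2) eqxx.
have bip : forall x y, e x y -> y \notin orb x.
  move=> x y exy; apply/negP => yx.
  have all : forall a b, e a b -> b \in orb a.
    move=> a b eab.
    have [g gG gx] := atransP2 trG (in_setT x) (in_setT a).
    rewrite /= apermE in gx.
    have egy : e a (g y) by rewrite gx auts.
    have gyo : g y \in orb a by rewrite gx; apply: omove.
    have [tr1 _] := loc a.
    have m1 : g y \in nbhd1 e a by rewrite inE.
    have m2 : b \in nbhd1 e a by rewrite inE.
    have [h hC hb] := atransP2 tr1 m1 m2.
    case/setIP: hC => hG /astab1P; rewrite /= apermE => ha.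
    rewrite hb /= apermE -ha; exact: omove.
  have [w nw] := other x; case/negP: nw.
  apply: (connect_closed (S := orb x)) (orbit_refl _ _ _) (conn x w).
  by move=> a b ax /all ba; apply: otr ba.
have n2sym : forall x y, (y \in nbhd2 e x) = (x \in nbhd2 e y).
  move=> x y; rewrite !inE eq_sym esym; congr [&& _, _ & _].
  by apply/existsP/existsP => -[w /andP[h1 h2]]; exists w; apply/andP; split; rewrite esym.
have d2G : forall g x y, g \in G -> (g y \in nbhd2 e (g x)) = (y \in nbhd2 e x).
  move=> g x y gG; rewrite !inE (inj_eq perm_inj) auts //; congr [&& _, _ & _].
  apply/existsP/existsP => -[w /andP[h1 h2]].
    by exists (g^-1 w); rewrite -(auts g gG) permKV h1 /= -(auts g gG) permKV h2.
  by exists (g w); rewrite !auts // h1.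
have [u [v vN2]] : exists u v, v \in nbhd2 e u.
  case: diam => a [b [ab nab]]; exists a.
  case: (set_0Vmem (nbhd2 e a)) => [N0 | [v vN]]; last by exists v.
  exfalso.
  have : b \in a |: nbhd1 e a.
    apply: (connect_closed (S := a |: nbhd1 e a)) (conn a b); last first.
      by rewrite !inE eqxx.
    move=> x y /setU1P [-> | ]; first by rewrite !inE => ->; rewrite orbT.
    rewrite !inE => eax exy.
    case: (boolP (y == a)) => //= ya; case: (boolP (e a y)) => //= nay.
    have : y \in nbhd2 e a.
      by rewrite !inE ya nay /=; apply/existsP; exists x; rewrite eax exy.
    by rewrite N0 inE.
  by rewrite !inE eq_sym (negbTE ab) (negbTE nab).
have [w0 nw0] := other u.
have two' : forall z, z \in orb u \/ z \in orb w0 := fun z => two u w0 z nw0.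
pose K z := 'C_F[z | 'P].
have KJ : forall t z, t \in G -> K z :^ t \subset K (t z).
  move=> t z tG; apply/subsetP => _ /imsetP [f /setIP [fF /astab1P fz] ->].
  rewrite /= apermE in fz.
  apply/setIP; split; first by rewrite memJ_norm // NG.
  by apply/astab1P; rewrite /= apermE conjgE !permM permK fz.
have [t1 t1G t1e] := atransP2 trG (in_setT u) (in_setT w0).
have [t2 t2G t2e] := atransP2 trG (in_setT w0) (in_setT u).
rewrite /= apermE in t1e; rewrite /= apermE in t2e.
have KuKw : K u = K w0.
  apply/eqP; rewrite (eq_subG_cyclic cycF) ?subsetIl //; apply/eqP/anti_leq.
  apply/andP; split.
    by rewrite -(cardJg _ t1) t1e subset_leq_card // KJ.
  by rewrite -(cardJg _ t2) t2e subset_leq_card // KJ.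
have fix1 : forall f, f \in F -> f u = u -> f = 1.
  move=> f fF fu; have fKu : f \in K u by apply/setIP; split; [|apply/astab1P].
  have fKw : f \in K w0 by rewrite -KuKw.
  case/setIP: fKw => _ /astab1P; rewrite /= apermE => fw.
  apply/permP => z; rewrite perm1.
  case: (two' z) => /orbP [h hF <-]; by rewrite commF // ?fu ?fw.
have semireg : forall z f, f \in F -> f z = z -> f = 1.
  move=> z f fF fz; apply: (fix1 f fF).
  case: (two' z) => /orbP [h hF hz]; move: fz; rewrite -hz commF //.
    by move/perm_inj.
  move/perm_inj => fw; have : f \in K w0 by apply/setIP; split; [|apply/astab1P].
  by rewrite -KuKw => /setIP [_ /astab1P].
have reg : forall z f1 f2, f1 \in F -> f2 \in F -> f1 z = f2 z -> f1 = f2.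
  move=> z f1 f2 f1F f2F e12; apply/eqP; rewrite eq_mulgV1; apply/eqP.
  by apply: (semireg z); rewrite ?groupM ?groupV // permM e12 permK.
pose Dz z := [set f in F | f z \in nbhd2 e z].
have DzE : forall z f, (f \in Dz z) = (f \in F) && (f z \in nbhd2 e z).
  by move=> z f; rewrite /Dz in_set.
have N2E : forall x y, (y \in nbhd2 e x) =
    [&& y != x, ~~ e x y & [exists w, e x w && e w y]].
  by move=> x y; rewrite /nbhd2 in_set.
have Dbase : forall z z', z' \in orb z -> Dz z' = Dz z.
  move=> z _ /orbP [h hF <-]; apply/setP => f; rewrite !DzE.
  case fF: (f \in F) => //=; by rewrite commF // d2G // FG.
have Dtrans : forall f1 f2, f1 \in Dz u -> f2 \in Dz u ->
    exists x, [/\ x \in G, x u = u & f1 ^ x = f2].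
  move=> f1 f2; rewrite !DzE => /andP [f1F f1N] /andP [f2F f2N].
  have [_ tr2] := loc u.
  have [x /setIP [xG /astab1P xu] xe] := atransP2 tr2 f1N f2N.
  rewrite /= apermE in xu xe.
  exists x; split => //.
  apply: (reg u); rewrite ?memJ_norm ?NG //.
  have xiu : x^-1 u = u by rewrite -{1}xu permK.
  by rewrite conjgE !permM xiu xe.
have DuDw : forall d, d \in Dz u -> d \in Dz w0.
  move=> d; rewrite DzE => /andP [dF dN].
  have diN : d^-1 u \in nbhd2 e u.
    by rewrite -(d2G d) ?FG // permKV -n2sym.
  move: (diN); rewrite N2E => /and3P [diu _ /existsP [w /andP [euw ewd]]].
  have wo : w \in orb w0.
    by case: (two' w) => // wu; case/negP: (bip _ _ euw).
  rewrite -(Dbase _ _ wo) DzE dF /=.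
  rewrite N2E; apply/and3P; split.
  - apply/eqP => dw; have d1 := semireg _ _ dF dw.
    by move: diu; rewrite d1 invg1 perm1 eqxx.
  - by apply/negP => /bip /negP; apply; apply/orbP; exists d.
  - apply/existsP; exists u; rewrite esym euw /=.
    by rewrite esym -(permKV d u) auts ?FG.
have [d dD] : exists d, d \in Dz u.
  have vo : v \in orb u.
    move: (vN2); rewrite N2E => /and3P [_ _ /existsP [w /andP [euw ewv]]].
    have wo : w \in orb w0 by case: (two' w) => // wu; case/negP: (bip _ _ euw).
    case: (two' v) => // vw.
    by case/negP: (bip _ _ ewv); rewrite (oeq _ _ wo).
  case/orbP: vo => d dF dv; exists d; by rewrite DzE dF dv.
have dtD : d ^ t2 \in Dz u.
  have := DuDw _ dD; rewrite !DzE => /andP [dF dN].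
  rewrite memJ_norm ?NG //=.
  have tiu : t2^-1 u = w0 by rewrite t2e permK.
  by rewrite conjgE !permM tiu dF t2e d2G.
have [x [xG xu dx]] := Dtrans _ _ dD dtD.
pose y := t2 * x^-1.
have yG : y \in G by rewrite groupM ?groupV.
have dy : d ^ y = d by rewrite /y conjgM -dx conjgK.
have dF : d \in F by move: dD; rewrite DzE => /andP [].
have cD : Dz u \subset 'C[y].
  apply/subsetP => d' d'D; have [x' [x'G x'u dx']] := Dtrans _ _ dD d'D.
  apply/cent1P/commgP/conjg_fixP.
  by rewrite -dx' (@cyclic_conj_comm _ F _ _ _ cycF) ?NG // dy.
have DF : Dz u \subset F by apply/subsetP => f; rewrite DzE => /andP [].
pose E := <<Dz u>>%G.
have EF : E \subset F by rewrite gen_subG.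
have EC : E \subset 'C[y] by rewrite gen_subG.
pose P := orbit 'P E u.
have PP : forall z, reflect (exists2 h, h \in E & h u = z) (z \in P).
  move=> z; apply: (iffP orbitP) => [[f fF <-]|[f fF <-]]; by exists f.
have Po : forall z, z \in P -> z \in orb u.
  by move=> z /PP [h hE <-]; apply/orbP; exists h => //; apply: (subsetP EF).
pose YY := P :|: [set z | [exists p in P, e p z]].
have Yall : forall z, z \in YY.
  move=> z; apply: (connect_closed (S := YY)) (conn u z); last first.
    by rewrite inE orbit_refl.
  move=> a b /setUP [aP | ]; first by move=> eab; rewrite !inE; apply/orP; right;
    apply/existsP; exists a; rewrite aP.
  rewrite inE => /existsP [p /andP [pP epa]] eab.
  have po := Po _ pP.
  have ao : a \in orb w0.
    case: (two' a) => // au; case/negP: (bip _ _ epa).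
    by rewrite (oeq _ _ po).
  have bo : b \in orb u.
    case: (two' b) => // bw; case/negP: (bip _ _ eab).
    by rewrite (oeq _ _ ao).
  case: (boolP (b == p)) => [/eqP -> | bp]; first by rewrite inE pP.
  have bop : b \in orb p by rewrite (oeq _ _ po).
  case/orbP: (bop) => f fF fb.
  have fD : f \in Dz p.
    rewrite DzE fF fb N2E bp /=; apply/andP; split.
      by apply/negP => /bip; rewrite bop.
    by apply/existsP; exists a; rewrite epa eab.
  rewrite (Dbase _ _ po) in fD.
  case/PP: pP => h hE hu.
  rewrite inE; apply/orP; left; apply/PP; exists (h * f).
    by rewrite groupM // mem_gen.
  by rewrite permM hu.
have FE : F \subset E.
  apply/subsetP => f fF; have := Yall (f u); rewrite inE => /orP [].
    case/PP => h hE hu; rewrite (reg u f h) //; apply: (subsetP EF) hE.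
  rewrite inE => /existsP [p /andP [pP epf]].
  case/negP: (bip _ _ epf); rewrite (oeq _ _ (Po _ pP)).
  by apply/orbP; exists f.
have yC : y \in 'C_G(F).
  by rewrite inE yG -sub_cent1 (subset_trans FE EC).
have yF : y \in F by apply: (subsetP (cent_Fitting solG)).
have : y w0 \in orb w0 by apply/orbP; exists y.
have xiu : x^-1 u = u by rewrite -{1}xu permK.
rewrite /y permM -t2e xiu orbit_sym.
by rewrite (negbTE nw0).
Qed.
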